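(* Let $\mathbb{F}_r$ be the free group on $r$ free generators, $r\in\mathbb{N}\cup\{\infty\}$, $r\ge1$. Then: (1) the function $g\mapsto\|g\|_2^2$ is conditionally negative definite on $\mathbb{F}_r$; equivalently, for every $s\in[0,1]$ the function $g\mapsto s^{\|g\|_2^2}$ is positive definite on $\mathbb{F}_r$; (2) the function $g\mapsto(-1)^{\|g\|_2^2}$ is positive definite on $\mathbb{F}_r$. Consequently, for every $s\in[-1,1]$ the function $g\mapsto s^{\|g\|_2^2}$ (with the convention $0^0=1$) is positive definite on $\mathbb{F}_r$.
   Context: Every $g\ne e$ in $\mathbb{F}_r$ has a unique reduced form $g = a_1^{k_1}\cdots a_n^{k_n}$ with $a_j$ free generators, $a_j\neq a_{j+1}$, $k_j\in\mathbb{Z}\setminus\{0\}$; $\|g\|_2^2 := \sum_{j=1}^n k_j^2$ and $\|e\|_2=0$. A function $\varphi$ on a group is positive definite if $\sum_{j,k=1}^n c_j\overline{c_k}\varphi(x_j^{-1}x_k)\ge0$ for all $n$, $x_i$ in the group, $c_i\in\mathbb{C}$; a function $\psi$ is conditionally negative definite if $\psi(g^{-1})=\overline{\psi(g)}$ and $\sum_{j,k} c_j\overline{c_k}\psi(x_j^{-1}x_k)\le0$ whenever $\sum_j c_j=0$. *)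

(* Defs.v *)
From mathcomp Require Import all_boot all_order all_algebra.
From mathcomp Require Import Rstruct.
From mathcomp.real_closed Require Import complex.
From Stdlib Require Import Reals.
Set Implicit Arguments. Unset Strict Implicit. Unset Printing Implicit Defensive.
Import Order.TTheory GRing.Theory Num.Theory.

(* Generators are a_0, a_1, ... indexed by nat.  The rank is an            *)
(* [option nat]: [Some n] means r = n (generators a_0..a_{n-1}),           *)
(* [None] means r = oo (generators a_0, a_1, ... all of nat).             *)
(* An element is represented by its unique reduced form                    *)
(*   a_{i_1}^{k_1} ... a_{i_m}^{k_m}  as the list [(i_1,k_1);...;(i_m,k_m)] *)
(* with k_j <> 0 and i_j <> i_{j+1}; the identity is [::].                 *)

Local Open Scope ring_scope.

Definition word := seq (nat * int).

Definition rank := option nat.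

Definition gen_ok (r : rank) (a : nat) : bool :=
  if r is Some n then (a < n)%nat else true.

Fixpoint reduced (w : word) : bool :=
  match w with
  | [::] => true
  | (a, k) :: w' =>
      (k != 0 :> int) &&
      (if w' is (b, _) :: _ then a != b else true) &&
      reduced w'
  end.

Definition in_Fr (r : rank) (w : word) : bool :=
  reduced w && all (fun p => gen_ok r p.1) w.

Definition push (p : nat * int) (w : word) : word :=
  let: (a, k) := p in
  match w with
  | [::] => if k == 0 :> int then [::] else [:: (a, k)]
  | (b, l) :: w' =>
      if a == b then (if k + l == 0 :> int then w' else (a, (k + l)) :: w')
      else if k == 0 :> int then w else (a, k) :: w
  end.

Definition fg_mul (u v : word) : word := foldr push v u.
Definition fg_inv (u : word) : word := rev (map (fun p => (p.1, (- p.2))) u).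

Definition norm2sq (w : word) : nat := \sum_(p <- w) expn (absz p.2) 2.

Notation C := (complex Rdefinitions.R).

Definition pos_def_Fr (r : rank) (phi : word -> C) : Prop :=
  forall (n : nat) (x : 'I_n -> word) (c : 'I_n -> C),
    (forall i, in_Fr r (x i)) ->
    0 <= \sum_(j < n) \sum_(k < n) c j * (c k)^* * phi (fg_mul (fg_inv (x j)) (x k)).

Definition cond_neg_def_Fr (r : rank) (psi : word -> C) : Prop :=
  (forall g, in_Fr r g -> psi (fg_inv g) = (psi g)^*) /\
  forall (n : nat) (x : 'I_n -> word) (c : 'I_n -> C),
    (forall i, in_Fr r (x i)) ->
    \sum_(j < n) c j = 0 ->
    \sum_(j < n) \sum_(k < n) c j * (c k)^* * psi (fg_mul (fg_inv (x j)) (x k)) <= 0.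

(* Main.v *)
Require Import Defs.
From mathcomp Require Import all_boot all_order all_algebra.
From mathcomp Require Import Rstruct.
From mathcomp.real_closed Require Import complex.
From Stdlib Require Import Reals.
From mathcomp Require Import zify ring lra.
Import Order.TTheory GRing.Theory Num.Theory.
Local Open Scope ring_scope.

Fixpoint ip (x y : word) : int :=
  match x, y with
  | (a,k)::x', (b,l)::y' => if a == b then (if k == l then k * l + ip x' y' else k * l) else 0
  | _, _ => 0 end.

Fixpoint bcoef (x : word) (pre : word) (c : nat) : int :=
  match x with
  | [::] => 0
  | (a,k)::x' => match pre with
       | [::] => if a == c then k else 0
       | s :: pre' => if s == (a,k) then bcoef x' pre' c else 0 end end.

Definition bc (x : word) (q : word * nat) := bcoef x q.1 q.2.

Fixpoint keys (x : word) : seq (word * nat) :=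
  match x with [::] => [::]
  | s::x' => ([::], s.1) :: map (fun q => (s :: q.1, q.2)) (keys x') end.

Lemma ip_keys x y : ip x y = \sum_(q <- keys x) bc x q * bc y q.
Proof.
elim: x y => [|[a k] x IH] y; first by rewrite big_nil; case: y.
rewrite [keys _]/= big_cons big_map /bc /= eqxx.
case: y => [|[b l] y].
  by rewrite /= mulr0 big1 ?addr0 // => q _; rewrite mulr0.
rewrite /= [b == a]eq_sym !xpair_eqE !eqxx /=.
case: (eqVneq a b) => [_|_] /=; last first.
  by rewrite mulr0 add0r big1 // => q _; rewrite mulr0.
rewrite /=.
case: (eqVneq k l) => [<-|_] /=; last by rewrite big1 ?addr0 // => q _; rewrite mulr0.
by rewrite IH.
Qed.

Lemma bc_supp x q : bc x q != 0 -> q \in keys x.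
Proof.
rewrite /bc; elim: x q => [|[a k] x IH] [[|s pre] c] //=.
  by case: (eqVneq a c) => [->|] //= _; rewrite inE eqxx.
case: (eqVneq s (a,k)) => [->|] //= /(IH (pre, c)) H; rewrite inE; apply/orP; right.
by apply: (map_f (fun q => ((a, k) :: q.1, q.2)) H).
Qed.

Lemma uniq_keys x : uniq (keys x).
Proof.
elim: x => //= [[a k] x IH]; rewrite (map_inj_uniq (f:= fun q => ((a, k) :: q.1, q.2))).
  by rewrite IH andbT; apply/mapP => [[q _]].
by move=> [? ?] [? ?] [-> ->].
Qed.

Lemma fg_inv_cons a k x : fg_inv ((a,k)::x) = rcons (fg_inv x) (a,-k).
Proof. by rewrite /fg_inv /= rev_cons. Qed.

Lemma fg_mul_rcons u p w : fg_mul (rcons u p) w = fg_mul u (push p w).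
Proof. by rewrite /fg_mul -cats1 foldr_cat. Qed.

Lemma push_reduced a k w : reduced w -> reduced (push (a,k) w).
Proof.
case: w => [|[b l] w] /=; first by case: (eqVneq k 0) => [_|k0] /=; rewrite ?k0.
move=> /andP[/andP[l0 hb] rw].
case: (eqVneq a b) => [E|ab]; first subst b.
  case: (eqVneq (k + l) 0) => [_|kl] //=; by rewrite kl hb rw.
case: (eqVneq k 0) => [_|k0] /=; first by rewrite l0 hb rw.
by rewrite k0 ab l0 hb rw.
Qed.

Lemma ip_hd0 a m x w : (if x is (c,_)::_ then a != c else true) -> ip x ((a,m)::w) = 0.
Proof. by case: x => [|[c j] x] //= H; rewrite eq_sym (negbTE H). Qed.

Lemma sqz k : ((expn (absz k) 2) : int) = k ^+ 2.
Proof. by rewrite expnS expn1 PoszM abszE -normrM ger0_norm -?expr2 ?sqr_ge0. Qed.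

Lemma norm2sq_cons a k w : ((norm2sq ((a,k)::w))%:Z) = k ^+ 2 + (norm2sq w)%:Z.
Proof. by rewrite /norm2sq big_cons PoszD sqz. Qed.

Lemma norm_mul x y : reduced x -> reduced y ->
  (norm2sq (fg_mul (fg_inv x) y))%:Z = (norm2sq x)%:Z + (norm2sq y)%:Z - 2 * ip x y
  /\ reduced (fg_mul (fg_inv x) y).
Proof.
elim: x y => [|[a k] x IH] y.
  by move=> _ ry; rewrite /= /norm2sq big_nil mulr0 subr0 add0r.
move=> /= /andP[/andP[k0 hx] rx] ry.
rewrite fg_inv_cons fg_mul_rcons.
have ry'' := push_reduced a (-k) y ry.
have [-> ->] := IH _ rx ry''; split => //.
rewrite norm2sq_cons.
case: y ry ry'' => [|[b l] y] ry ry''.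
  rewrite /= oppr_eq0 (negbTE k0) ip_hd0 // norm2sq_cons /norm2sq big_nil sqrrN.
  by rewrite /=; ring.
rewrite /=; case: (eqVneq a b) => [<-|ab].
  case: (eqVneq (-k + l) 0) => [kl|kl].
    have -> : l = k by move/eqP: kl; rewrite addrC subr_eq0 => /eqP.
    rewrite eqxx norm2sq_cons; ring.
  rewrite ip_hd0 // ifF; last by apply/negP => /eqP E; move: kl; rewrite E addNr eqxx.
  rewrite !norm2sq_cons; ring.
rewrite oppr_eq0 (negbTE k0) ip_hd0 // norm2sq_cons sqrrN.
rewrite norm2sq_cons; ring.
Qed.

Lemma mul_eq_nil x y : reduced x -> reduced y -> fg_mul (fg_inv x) y = [::] -> x = y.
Proof.
elim: x y => [|[a k] x IH] y; first by move=> _ _ /= ->.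
move=> /= /andP[/andP[k0 hx] rx] ry.
rewrite fg_inv_cons fg_mul_rcons => /(IH _ rx (push_reduced a (-k) y ry)) E.
case: y ry E => [|[b l] y] ry /=.
  by rewrite oppr_eq0 (negbTE k0) => E; move: hx; rewrite E eqxx.
case: (eqVneq a b) => [<-|ab].
  case: (eqVneq (-k + l) 0) => [kl|kl] E.
    have lk : l = k by move/eqP: kl; rewrite addrC subr_eq0 => /eqP.
    by rewrite E lk.
  by move: hx; rewrite E eqxx.
by rewrite oppr_eq0 (negbTE k0) => E; move: hx; rewrite E eqxx.
Qed.

Lemma norm0_nil w : reduced w -> norm2sq w = 0%N -> w = [::].
Proof.
case: w => [|[a k] w] //= /andP[/andP[k0 _] _] H.
have : (norm2sq ((a,k)::w))%:Z = 0 by rewrite H.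
rewrite norm2sq_cons => /eqP; rewrite paddr_eq0 ?sqr_ge0 // sqrf_eq0 (negbTE k0) //.
Qed.

Lemma gram_psd (I : Type) n (r : seq I) (f : 'I_n -> I -> R) (a : 'I_n -> R) :
  0 <= \sum_j \sum_k a j * a k * \sum_(i <- r) f j i * f k i.
Proof.
suff -> : \sum_j \sum_k a j * a k * \sum_(i <- r) f j i * f k i =
          \sum_(i <- r) (\sum_j a j * f j i) ^+ 2.
  by apply: sumr_ge0 => i _; exact: sqr_ge0.
under [RHS]eq_bigr => i _ do rewrite expr2 mulr_suml.
under [RHS]eq_bigr => i _ do under eq_bigr => j _ do rewrite mulr_sumr.
rewrite [RHS]exchange_big /=; apply: eq_bigr => j _.
rewrite [RHS]exchange_big /=; apply: eq_bigr => k _.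
rewrite mulr_sumr; apply: eq_bigr => i _; ring.
Qed.

Lemma gram_pow_psd n m (d : 'I_n -> R) (beta : 'I_n -> 'I_m -> R) p :
  0 <= \sum_j \sum_k d j * d k * (\sum_i beta j i * beta k i) ^+ p.
Proof.
have E : forall j k, (\sum_i beta j i * beta k i) ^+ p =
   \sum_(f : {ffun 'I_p -> 'I_m}) (\prod_l beta j (f l)) * (\prod_l beta k (f l)).
  move=> j k; rewrite -{1}(card_ord p) -prodr_const bigA_distr_bigA /=.
  by apply: eq_bigr => f _; rewrite -big_split.
under eq_bigr do under eq_bigr do rewrite E.
exact: (gram_psd _ _ (index_enum _) (fun j (f : {ffun 'I_p -> 'I_m}) => \prod_l beta j (f l))).
Qed.

Lemma cv_const c : Un_cv (fun _ => c) c.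
Proof. move=> e he; exists 0%N => N _; rewrite RdistE subrr normr0; exact he. Qed.

Lemma cv_sum (I : Type) (r : seq I) (u : I -> nat -> R) (l : I -> R) :
  (forall i, Un_cv (u i) (l i)) -> Un_cv (fun N => \sum_(i <- r) u i N) (\sum_(i <- r) l i).
Proof.
move=> H; elim: r => [|i r IH].
  apply: (Un_cv_ext (fun _ => 0)); first by move=> N; rewrite big_nil.
  rewrite big_nil; exact: cv_const.
apply: (Un_cv_ext (fun N => u i N + \sum_(j <- r) u j N)); first by move=> N; rewrite big_cons.
rewrite big_cons; exact: CV_plus.
Qed.

Lemma E1E x N : E1 x N = \sum_(p < N.+1) (p`!%:R)^-1 * x ^+ p.
Proof.
rewrite /E1 sum_f_R0E big_mkord; apply: eq_bigr => p _.
by rewrite RmultE RinvE INRE factE RpowE.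
Qed.

Lemma psd_exp_gram n m (d : 'I_n -> R) (beta : 'I_n -> 'I_m -> R) t : 0 <= t ->
  0 <= \sum_j \sum_k d j * d k * exp (t * \sum_i beta j i * beta k i).
Proof.
move=> t0.
have cv : Un_cv (fun N => \sum_j \sum_k d j * d k * E1 (t * \sum_i beta j i * beta k i) N)
                (\sum_j \sum_k d j * d k * exp (t * \sum_i beta j i * beta k i)).
  apply: cv_sum => j; apply: cv_sum => k.
  apply: CV_mult; [exact: cv_const | exact: E1_cvg].
apply/RleP; eapply Rle_cv_lim; last exact: cv; last exact: (cv_const 0).
move=> N /=; apply/RleP.
under eq_bigr do under eq_bigr do rewrite E1E mulr_sumr.
under eq_bigr do rewrite exchange_big.
rewrite exchange_big /=; apply: sumr_ge0 => p _.
have H : forall j k, d j * d k * ((p`!%:R)^-1 * (t * \sum_i beta j i * beta k i) ^+ p) =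
   ((p`!%:R)^-1 * t ^+ p) * (d j * d k * (\sum_i beta j i * beta k i) ^+ p).
  by move=> j k; rewrite exprMn; ring.
under eq_bigr do under eq_bigr do rewrite H.
under eq_bigr do rewrite -mulr_sumr.
rewrite -mulr_sumr; apply: mulr_ge0; last exact: gram_pow_psd.
by apply: mulr_ge0; [rewrite invr_ge0 ler0n | exact: exprn_ge0].
Qed.

Lemma sum_sub (T : eqType) (K S : seq T) (f : T -> int) : uniq K -> uniq S ->
  {subset S <= K} -> (forall q, q \notin S -> f q = 0) ->
  \sum_(q <- K) f q = \sum_(q <- S) f q.
Proof.
move=> uK uS sub f0.
rewrite (bigID (fun q => q \in S)) /= [X in _ + X]big1 ?addr0; last by move=> q /f0.
rewrite -big_filter; apply: perm_big; apply: uniq_perm; [exact: filter_uniq | exact: uS|].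
move=> q; rewrite mem_filter; apply/andP/idP => [[]//|H]; split => //; exact: sub.
Qed.

Lemma ip_self w : ip w w = (norm2sq w)%:Z.
Proof.
elim: w => [|[a k] w IH] /=; first by rewrite /norm2sq big_nil.
by rewrite !eqxx norm2sq_cons IH expr2.
Qed.

Section Fam.
Variables (n : nat) (x : 'I_n -> word).
Hypothesis rx : forall j, reduced (x j).

Definition psi j k := norm2sq (fg_mul (fg_inv (x j)) (x k)).
Definition NN j := norm2sq (x j).
Definition KK := undup (flatten [seq keys (x j) | j <- enum 'I_n]).
Definition beta j (i : 'I_(size KK)) : R := (bc (x j) (nth ([::], 0%N) KK i))%:~R.

Lemma psi_int j k : (psi j k)%:Z = (NN j)%:Z + (NN k)%:Z - 2 * ip (x j) (x k).
Proof. exact: (norm_mul _ _ (rx j) (rx k)).1. Qed.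

Lemma ip_gram j k : (ip (x j) (x k))%:~R = \sum_i beta j i * beta k i.
Proof.
have sub : {subset keys (x j) <= KK}.
  move=> q qj; rewrite mem_undup; apply/flattenP; exists (keys (x j)) => //.
  by apply: map_f; rewrite mem_enum.
have z0 : forall q, q \notin keys (x j) -> bc (x j) q * bc (x k) q = 0.
  by move=> q qn; case: (eqVneq (bc (x j) q) 0) => [->|/bc_supp]; rewrite ?mul0r // (negbTE qn).
rewrite ip_keys -(sum_sub _ KK _ _ (undup_uniq _) (uniq_keys _) sub z0).
rewrite rmorph_sum (big_nth ([::], 0%N)) big_mkord; apply: eq_bigr => i _.
by rewrite rmorphM.
Qed.

Lemma psi_R j k : (psi j k)%:R = (NN j)%:R + (NN k)%:R - 2 * \sum_i beta j i * beta k i :> R.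
Proof.
have := congr1 (fun z : int => z%:~R : R) (psi_int j k).
by rewrite rmorphB rmorphD rmorphM /= ip_gram.
Qed.

Lemma psi_sym j k : psi j k = psi k j.
Proof.
apply/eqP; rewrite -(eqr_nat R) !psi_R; apply/eqP.
under eq_bigr do rewrite mulrC; ring.
Qed.

Lemma sign_par (p q : nat) (z : int) : (p:int) = q%:Z - 2 * z -> (-1:R)^+p = (-1)^+q.
Proof.
case: z => m H.
  have E : (p + 2 * m = q)%N by lia.
  by rewrite -E exprD exprM sqrrN expr1n expr1n mulr1.
have E : (p = q + 2 * m.+1)%N by move: H; rewrite NegzE; lia.
by rewrite E exprD exprM sqrrN expr1n expr1n mulr1.
Qed.

Lemma psi_par j k : (-1:R) ^+ psi j k = (-1) ^+ NN j * (-1) ^+ NN k.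
Proof. by rewrite -exprD (sign_par _ _ _ (psi_int j k)). Qed.

Lemma psi0 j k : (psi j k == 0%N) = (x j == x k).
Proof.
apply/eqP/eqP => [H|E].
  apply: mul_eq_nil (rx j) (rx k) _; apply: norm0_nil H.
  exact: (norm_mul _ _ (rx j) (rx k)).2.
have H : (psi j k)%:Z = 0%N by rewrite psi_int /NN E ip_self; ring.
by case: H.
Qed.

Lemma rs_pos (a : 'I_n -> R) s : 0 < s <= 1 ->
  0 <= \sum_j \sum_k a j * a k * s ^+ psi j k.
Proof.
move=> /andP[s0 s1].
have L0 : ln s <= 0.
  case: (eqVneq s 1) => [->|ne]; first by rewrite ln_1 R0E.
  have h1 : s < 1 by rewrite lt_neqAle ne s1.
  have := ln_increasing _ _ (elimT RltP s0) (elimT RltP h1).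
  by rewrite ln_1 R0E => /RltP /ltW.
set L := ln s in L0 *.
have E : forall j k, a j * a k * s ^+ psi j k =
   (a j * exp (L * (NN j)%:R)) * (a k * exp (L * (NN k)%:R)) *
   exp ((- (2%:R) * L) * \sum_i beta j i * beta k i).
  move=> j k; rewrite -{1}(exp_ln s (elimT RltP s0)) -/L expRX -[L *+ _]mulr_natr psi_R.
  set S := (\sum_i beta j i * beta k i).
  have -> : L * ((NN j)%:R + (NN k)%:R - 2 * S) = L * (NN j)%:R + L * (NN k)%:R + (- (2%:R) * L) * S by ring.
  rewrite -!expRD; ring.
under eq_bigr do under eq_bigr do rewrite E.
apply: psd_exp_gram; by rewrite RmultE RoppE mulNr oppr_ge0 mulr_ge0_le0.
Qed.

Lemma rs_zero (a : 'I_n -> R) : 0 <= \sum_j \sum_k a j * a k * 0 ^+ psi j k.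
Proof.
set W := undup [seq x j | j <- enum 'I_n].
have E : forall j k, (0:R) ^+ psi j k = \sum_(w <- W) (x j == w)%:R * (x k == w)%:R.
  move=> j k; rewrite expr0n psi0 (bigD1_seq (x j)) /=; last exact: undup_uniq.
    rewrite eqxx mul1r big1 ?addr0 1?eq_sym // => w /negbTE.
    by rewrite eq_sym => ->; rewrite mul0r.
  by rewrite mem_undup; apply: map_f; rewrite mem_enum.
under eq_bigr do under eq_bigr do rewrite E.
exact: gram_psd.
Qed.

Lemma rs_all (a : 'I_n -> R) s : -1 <= s <= 1 ->
  0 <= \sum_j \sum_k a j * a k * s ^+ psi j k.
Proof.
move=> /andP[s1 s2].
case: (ltgtP s 0) => [sn|sp|->]; last exact: rs_zero.
  have E : forall j k, a j * a k * s ^+ psi j k =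
     (a j * (-1) ^+ NN j) * (a k * (-1) ^+ NN k) * (- s) ^+ psi j k.
    move=> j k.
    have h : forall m, (-1:R)^+m * (-1)^+m = 1.
      by move=> m; rewrite -expr2 -exprM mulnC exprM sqrrN !expr1n.
    rewrite (_ : (-s) ^+ psi j k = (-1) ^+ psi j k * s ^+ psi j k); last by rewrite -exprMn mulN1r.
    rewrite psi_par.
    transitivity (a j * a k * s ^+ psi j k * (((-1)^+NN j * (-1)^+NN j) * ((-1)^+NN k * (-1)^+NN k))).
      by rewrite !h !mulr1.
    ring.
  under eq_bigr do under eq_bigr do rewrite E.
  apply: rs_pos; rewrite oppr_gt0 sn /= -lerN2 opprK //.
by apply: rs_pos; rewrite sp s2.
Qed.

Lemma rs_cnd (a : 'I_n -> R) : \sum_j a j = 0 ->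
  \sum_j \sum_k a j * a k * (psi j k)%:R <= 0.
Proof.
move=> a0.
have E : forall j k, a j * a k * (psi j k)%:R =
   a j * (NN j)%:R * a k + a j * (a k * (NN k)%:R) - 2 * (a j * a k * \sum_i beta j i * beta k i).
  by move=> j k; rewrite psi_R; ring.
under eq_bigr do under eq_bigr do rewrite E.
under eq_bigr do rewrite sumrB big_split /= -mulr_sumr -mulr_sumr a0 mulr0 add0r -mulr_sumr.
rewrite sumrB -mulr_suml a0 mul0r add0r -mulr_sumr oppr_le0.
by apply: mulr_ge0 => //; exact: gram_psd.
Qed.
End Fam.

Local Notation "x %:C" := (real_complex R x) : ring_scope.

Lemma conjE (z : complex R) : z^* = conjc z.
Proof. by []. Qed.

Lemma anti n (f : 'I_n -> 'I_n -> R) : (forall j k, f k j = - f j k) -> \sum_j \sum_k f j k = 0.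
Proof.
move=> H; set S := \sum_j \sum_k f j k.
have : S = - S.
  rewrite {1}/S exchange_big /= -sumrN; apply: eq_bigr => j _.
  rewrite -sumrN; apply: eq_bigr => k _; exact: H.
move=> E; lra.
Qed.

Lemma lift n (K : 'I_n -> 'I_n -> R) (c : 'I_n -> complex R) : (forall j k, K j k = K k j) ->
  \sum_j \sum_k c j * (c k)^* * (K j k)%:C =
  (\sum_j \sum_k complex.Re (c j) * complex.Re (c k) * K j k + \sum_j \sum_k complex.Im (c j) * complex.Im (c k) * K j k)%:C.
Proof.
move=> Ks.
have T : forall j k, c j * (c k)^* * (K j k)%:C =
   ((complex.Re (c j) * complex.Re (c k) + complex.Im (c j) * complex.Im (c k)) * K j k)%:C +
   'i%C * ((complex.Im (c j) * complex.Re (c k) - complex.Re (c j) * complex.Im (c k)) * K j k)%:C.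
  move=> j k; rewrite conjE; case: (c j) => a b; case: (c k) => a' b'.
  apply/eqP; rewrite eq_complex /=; apply/andP; split; apply/eqP; ring.
under eq_bigr do under eq_bigr do rewrite T.
under eq_bigr do rewrite big_split /=.
rewrite big_split /=.
under eq_bigr do rewrite -(rmorph_sum (real_complex R)).
under [X in _ + X]eq_bigr do rewrite -mulr_sumr -(rmorph_sum (real_complex R)).
rewrite -mulr_sumr -!(rmorph_sum (real_complex R)).
rewrite (anti _ (fun j k => (complex.Im (c j) * complex.Re (c k) - complex.Re (c j) * complex.Im (c k)) * K j k)); last first.
  by move=> j k; rewrite Ks; ring.
rewrite rmorph0 mulr0 addr0; congr (_ %:C).
rewrite -big_split /=; apply: eq_bigr => j _; rewrite -big_split /=.
by apply: eq_bigr => k _; ring.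
Qed.

Lemma Re_sum (I : Type) (r : seq I) (f : I -> complex R) : complex.Re (\sum_(i <- r) f i) = \sum_(i <- r) complex.Re (f i).
Proof.
elim: r => [|i r IH]; first by rewrite !big_nil.
by rewrite !big_cons -IH; case: (f i); case: (\sum_(j <- r) f j).
Qed.

Lemma Im_sum (I : Type) (r : seq I) (f : I -> complex R) : complex.Im (\sum_(i <- r) f i) = \sum_(i <- r) complex.Im (f i).
Proof.
elim: r => [|i r IH]; first by rewrite !big_nil.
by rewrite !big_cons -IH; case: (f i); case: (\sum_(j <- r) f j).
Qed.

Lemma norm2sq_inv g : norm2sq (fg_inv g) = norm2sq g.
Proof. by rewrite /norm2sq /fg_inv big_rev big_map; apply: eq_bigr => p _; rewrite abszN. Qed.

Lemma pd_all r (s : R) : -1 <= s <= 1 -> pos_def_Fr r (fun g => real_complex _ (s ^+ norm2sq g)).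
Proof.
move=> hs n x c hx.
have rx : forall j, reduced (x j) by move=> j; case/andP: (hx j).
rewrite (lift n (fun j k => s ^+ psi n x j k)); last by move=> j k; rewrite psi_sym.
by rewrite ler0c; apply: addr_ge0; apply: rs_all.
Qed.

Theorem proposition4p2 (r : rank) (hr : if r is Some n then (0 < n)%nat else true) :
  cond_neg_def_Fr r (fun g => (norm2sq g)%:R) /\
  (forall s : Rdefinitions.R, 0 <= s <= 1 ->
     pos_def_Fr r (fun g => real_complex _ (s ^+ norm2sq g))) /\
  pos_def_Fr r (fun g => (-1) ^+ norm2sq g) /\
  (forall s : Rdefinitions.R, -1 <= s <= 1 ->
     pos_def_Fr r (fun g => real_complex _ (s ^+ norm2sq g))).
Proof.
split; last split; last split.
- split.
    by move=> g _; rewrite norm2sq_inv conjE -(rmorph_nat (real_complex R)) conjc_real.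
  move=> n x c hx c0.
  have rx : forall j, reduced (x j) by move=> j; case/andP: (hx j).
  under eq_bigr do under eq_bigr do rewrite -(rmorph_nat (real_complex R)).
  rewrite (lift n (fun j k => (psi n x j k)%:R)); last by move=> j k; rewrite psi_sym.
  rewrite -(rmorph0 (real_complex R)) lecR.
  have h1 := rs_cnd n x rx (fun j => complex.Re (c j)) (etrans (esym (Re_sum _ _ _)) (congr1 _ c0)).
  have h2 := rs_cnd n x rx (fun j => complex.Im (c j)) (etrans (esym (Im_sum _ _ _)) (congr1 _ c0)).
  simpl in h1, h2; lra.
- by move=> s /andP[s0 s1]; apply: pd_all; apply/andP; split; lra.
- move=> n x c hx.
  have h : (- (GRing.one R) <= - GRing.one R) && (- GRing.one R <= GRing.one R) by rewrite lexx /=; lra.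
  have := pd_all r (- GRing.one R) h n x c hx.
  by under eq_bigr do under eq_bigr do rewrite rmorphXn rmorphN1.
- exact: pd_all.
Qed.
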